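(* Let $A\in\mathbb{R}^{m\times n}$ be semi-monotone (i.e. $A^{\dagger}\geq 0$), and let $A=M-N=U-V$ be two proper weak regular splittings of $A$. Then $\rho(H)=\rho(U^{\dagger}VM^{\dagger}N)<1$.
   Context: All matrices are real. $X^{\dagger}$ denotes the Moore–Penrose inverse of $X$, and $\rho(\cdot)$ the spectral radius. For a matrix $X$, $X\geq 0$ means that all entries of $X$ are nonnegative and at least one entry is positive; $X\geq Y$ means $X-Y\geq 0$. $R(X)$ and $N(X)$ denote range and null space. A splitting $A=U-V$ is proper if $R(U)=R(A)$ and $N(U)=N(A)$; it is a proper weak regular splitting if it is proper, $U^{\dagger}\geq 0$ and $U^{\dagger}V\geq 0$. $H=U^{\dagger}VM^{\dagger}N$ is the iteration matrix of the alternating scheme $x^{i+1}=U^{\dagger}VM^{\dagger}Nx^{i}+U^{\dagger}(VM^{\dagger}+I)b$. *)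

(* Defs.v *)
From HB Require Import structures.
From mathcomp Require Import all_boot all_order all_algebra.
From mathcomp Require Import complex.
From mathcomp Require Import boolp classical_sets reals.
Set Implicit Arguments. Unset Strict Implicit. Unset Printing Implicit Defensive.
Import Order.TTheory GRing.Theory Num.Theory.
Local Open Scope ring_scope.
Local Open Scope classical_set_scope.

Section Defs.
Variable R : realType.

Definition is_mpinv (m n : nat) (A : 'M[R]_(m, n)) (X : 'M[R]_(n, m)) : Prop :=
  [/\ A *m X *m A = A, X *m A *m X = X,
      (A *m X)^T = A *m X & (X *m A)^T = X *m A].

(* X >= 0 : all entries nonnegative and at least one positive. *)
Definition mx_nonneg (m n : nat) (X : 'M[R]_(m, n)) : Prop :=
  (forall i j, 0 <= X i j) /\ (exists i j, 0 < X i j).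

Definition mx_range (m n : nat) (X : 'M[R]_(m, n)) : set 'cV[R]_m :=
  [set y | exists x : 'cV[R]_n, y = X *m x].
Definition mx_null (m n : nat) (X : 'M[R]_(m, n)) : set 'cV[R]_n :=
  [set x | X *m x = 0].

Definition proper_weak_regular_splitting (m n : nat)
    (A U V : 'M[R]_(m, n)) (Ud : 'M[R]_(n, m)) : Prop :=
  [/\ A = U - V,
      mx_range U = mx_range A /\ mx_null U = mx_null A,
      is_mpinv U Ud, mx_nonneg Ud & mx_nonneg (Ud *m V)].

Definition spectral_radius (n : nat) (H : 'M[R]_n) : R :=
  sup [set Normc.normc l | l in
        [set l : R[i] | eigenvalue (map_mx (fun x : R => (x%:C)%C) H) l]].
End Defs.

(* Main.v *)
Require Import Defs.
From HB Require Import structures.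
From mathcomp Require Import all_boot all_order all_algebra.
From mathcomp Require Import complex.
From mathcomp Require Import boolp classical_sets reals.
From mathcomp Require Import lra.
Import Order.TTheory GRing.Theory Num.Theory.
Local Open Scope ring_scope.
Set Implicit Arguments. Unset Strict Implicit.

Section Alg.
Variable R : realType.

Lemma colmul (p q r : nat) (X : 'M[R]_(p, q)) (K : 'M[R]_(q, r)) j :
  col j (X *m K) = X *m col j K.
Proof. by rewrite !colE mulmxA. Qed.

Lemma mx_eq_col (p q : nat) (X Y : 'M[R]_(p, q)) :
  (forall j, col j X = col j Y) -> X = Y.
Proof.
move=> H; apply/matrixP => i j.
by have /matrixP /(_ i 0) := H j; rewrite !mxE.
Qed.

Lemma null_lem (m n : nat) (A M : 'M[R]_(m, n)) (Md : 'M[R]_(n, m)) :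
  M *m Md *m M = M -> mx_null M = mx_null A -> A *m (Md *m M) = A.
Proof.
move=> hM hN.
apply/eqP; rewrite eq_sym -subr_eq0; apply/eqP.
have -> : A - A *m (Md *m M) = A *m (1%:M - Md *m M)
  by rewrite mulmxBr mulmx1.
apply: mx_eq_col => j; rewrite colmul.
have hm : mx_null M (col j (1%:M - Md *m M)).
  by rewrite /mx_null /= -colmul mulmxBr mulmx1 mulmxA hM subrr colE mul0mx.
rewrite hN in hm; rewrite hm.
by rewrite colE mul0mx.
Qed.

Lemma range_lem (m n : nat) (A M : 'M[R]_(m, n)) (Ad : 'M[R]_(n, m)) :
  A *m Ad *m A = A -> mx_range M = mx_range A -> A *m Ad *m M = M.
Proof.
move=> hA hR.
apply: mx_eq_col => j; rewrite colmul.
have hm : mx_range M (col j M).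
  by exists (col j 1%:M); rewrite -colmul mulmx1.
rewrite hR in hm; case: hm => x ->.
by rewrite mulmxA hA.
Qed.

Lemma pinv_lem (m n : nat) (A M : 'M[R]_(m, n)) (Ad Md : 'M[R]_(n, m)) :
  is_mpinv A Ad -> is_mpinv M Md ->
  mx_range M = mx_range A -> mx_null M = mx_null A ->
  Md *m M *m Ad = Ad /\ Md *m A *m Ad = Md.
Proof.
move=> [a1 a2 a3 a4] [m1 m2 m3 m4] hR hN.
have h1 := @null_lem _ _ A M Md m1 hN.
have h2 := @range_lem _ _ A M Ad a1 hR.
split.
-
  have eAd : Ad = A^T *m (Ad^T *m Ad).
    by rewrite -{1}a2 -a4 trmx_mul mulmxA.
  have eAT : Md *m M *m A^T = A^T.
    by rewrite -m4 -trmx_mul h1.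
  by rewrite {1}eAd (mulmxA (Md *m M)) eAT -eAd.
- have eMd : Md = Md *m (Md^T *m M^T).
    by rewrite -trmx_mul m3 mulmxA m2.
  have eMT : M^T *m (A *m Ad) = M^T.
    by rewrite -a3 -trmx_mul h2.
  by rewrite {1}eMd -!mulmxA eMT -eMd.
Qed.

Definition nn (p q : nat) (X : 'M[R]_(p, q)) := forall i j, 0 <= X i j.

Lemma nn_mul (p q r : nat) (X : 'M[R]_(p, q)) (Y : 'M[R]_(q, r)) :
  nn X -> nn Y -> nn (X *m Y).
Proof.
move=> hX hY i j; rewrite mxE; apply: sumr_ge0 => k _.
exact: mulr_ge0.
Qed.

Lemma nn_add (p q : nat) (X Y : 'M[R]_(p, q)) : nn X -> nn Y -> nn (X + Y).
Proof. by move=> hX hY i j; rewrite mxE addr_ge0. Qed.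

Lemma key_id (m n : nat) (A M N U V : 'M[R]_(m, n)) (Ad Md Ud : 'M[R]_(n, m)) :
  is_mpinv A Ad ->
  proper_weak_regular_splitting A M N Md ->
  proper_weak_regular_splitting A U V Ud ->
  Ud *m V *m Md *m N *m Ad = Ad - (Ud + Ud *m V *m Md).
Proof.
move=> hA [eM [rM nM] pM _ _] [eU [rU nU] pU _ _].
have [m1 m2] := pinv_lem hA pM rM nM.
have [u1 u2] := pinv_lem hA pU rU nU.
have eN : N = M - A by rewrite eM opprB addrC subrK.
have eV : V = U - A by rewrite eU opprB addrC subrK.
have h1 : Md *m N *m Ad = Ad - Md by rewrite eN mulmxBr mulmxBl m1 m2.
have h2 : Ud *m V *m Ad = Ad - Ud by rewrite eV mulmxBr mulmxBl u1 u2.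
rewrite -!mulmxA (mulmxA Md) h1 !mulmxBr !mulmxA h2.
rewrite [in RHS]opprD. by rewrite addrA.
Qed.

Lemma real_arg (m n : nat) (Ad Ud B : 'M[R]_(n, m)) (W : 'M[R]_(m, n))
   (a : 'rV[R]_n) (l : R) :
  nn Ad -> nn Ud -> nn B -> nn a -> 1 <= l ->
  (Ud *m W) *m Ad = Ad - (Ud + B) ->
  (forall j, l * a 0 j <= (a *m (Ud *m W)) 0 j) -> a = 0.
Proof.
move=> hAd hUd hB ha hl hH hle.
set H := Ud *m W in hH hle *.
have c1 : forall j, l * (a *m Ad) 0 j <= (a *m Ad) 0 j - (a *m (Ud + B)) 0 j.
  move=> j.
  have -> : (a *m Ad) 0 j - (a *m (Ud + B)) 0 j = (a *m H *m Ad) 0 j.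
    by rewrite -mulmxA hH mulmxBr [RHS]mxE; congr (_ + _); rewrite !mxE.
  rewrite [X in _ * X]mxE [X in _ <= X]mxE mulr_sumr; apply: ler_sum => k _.
  by rewrite mulrA; apply: ler_wpM2r => //; exact: hle.
have c2 : forall j, (a *m (Ud + B)) 0 j = 0.
  move=> j; apply/eqP; rewrite eq_le.
  have hp := nn_mul ha (nn_add hUd hB) 0 j; rewrite hp andbT.
  have hc := nn_mul ha hAd 0 j.
  have := c1 j.
  have : (a *m Ad) 0 j <= l * (a *m Ad) 0 j.
    by rewrite -{1}(mul1r ((a *m Ad) 0 j)); apply: ler_wpM2r.
  move=> h1 h2; have := le_trans h1 h2.
  lra.
have c3 : a *m Ud = 0.
  apply/matrixP => i j; rewrite (ord1 i) [RHS]mxE.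
  have := c2 j; rewrite mulmxDr mxE => /eqP; rewrite paddr_eq0.
    by case/andP => /eqP.
    exact: nn_mul.
  exact: nn_mul.
have c4 : a *m H = 0 by rewrite /H mulmxA c3 mul0mx.
apply/matrixP => i j; rewrite (ord1 i) [RHS]mxE.
apply/eqP; rewrite eq_le ha andbT.
have := hle j; rewrite c4 mxE => h.
have l0 : 0 < l by apply: lt_le_trans hl.
by rewrite -(pmulr_rle0 _ l0).
Qed.

Lemma normc_ge0 (x : R[i]) : 0 <= Normc.normc x.
Proof. by case: x => a b; exact: sqrtr_ge0. Qed.

Lemma normc_real (r : R) : 0 <= r -> Normc.normc (r%:C)%C = r.
Proof.
move=> hr; rewrite /Normc.normc /= expr0n /= addr0 sqrtr_sqr.
exact: ger0_norm.
Qed.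

Lemma normc_sum (I : Type) (r : seq I) (F : I -> R[i]) :
  Normc.normc (\sum_(i <- r) F i) <= \sum_(i <- r) Normc.normc (F i).
Proof.
elim: r => [|x r IH]; first by rewrite !big_nil Normc.normc0.
rewrite !big_cons; apply: le_trans (le_normcD _ _) _.
exact: lerD.
Qed.

Lemma eig_bound (n : nat) (H : 'M[R]_n) :
  nn H ->
  (forall (a : 'rV[R]_n) l, nn a -> 1 <= l ->
     (forall j, l * a 0 j <= (a *m H) 0 j) -> a = 0) ->
  forall z, eigenvalue (map_mx (fun x : R => (x%:C)%C) H) z ->
  Normc.normc z < 1.
Proof.
move=> hH hP z /eigenvalueP [y hy ny].
rewrite ltNge; apply/negP => hz.
pose a : 'rV[R]_n := \row_j Normc.normc (y 0 j).
have ha : nn a by move=> i j; rewrite mxE; exact: normc_ge0.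
have hle : forall j, Normc.normc z * a 0 j <= (a *m H) 0 j.
  move=> j; rewrite mxE -Normc.normcM.
  have : (z *: y) 0 j = (y *m map_mx (fun x : R => (x%:C)%C) H) 0 j by rewrite hy.
  rewrite mxE => ->; rewrite mxE.
  apply: le_trans (normc_sum _ _) _; rewrite mxE; apply: ler_sum => k _.
  by rewrite Normc.normcM mxE (normc_real (hH k j)) mxE.
have a0 := hP a _ ha hz hle.
apply/negP: ny; rewrite negbK; apply/eqP/matrixP => i j.
rewrite (ord1 i) [RHS]mxE; apply: Normc.eq0_normc.
by have /matrixP /(_ 0 j) := a0; rewrite !mxE.
Qed.

Lemma sr_lt1 (n : nat) (H : 'M[R]_n) :
  (forall z, eigenvalue (map_mx (fun x : R => (x%:C)%C) H) z ->
  Normc.normc z < 1) -> spectral_radius H < 1.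
Proof.
move=> hz; rewrite /spectral_radius.
have [rs hrs] := closed_field_poly_normal (char_poly (map_mx (fun x : R => (x%:C)%C) H)).
have inrs : forall w, eigenvalue (map_mx (fun x : R => (x%:C)%C) H) w -> w \in rs.
  move=> w; rewrite eigenvalue_root_char hrs.
  by rewrite (monicP (char_poly_monic _)) scale1r root_prod_XsubC.
pose c := \big[Order.max/0]_(w <- rs) Normc.normc w.
have hc : c < 1.
  rewrite /c big_seq; apply: (big_ind (fun x => x < 1)) => //.
    by move=> x y hx hy; rewrite gt_max hx hy.
  move=> w hw; apply: hz; rewrite eigenvalue_root_char hrs.
  by rewrite (monicP (char_poly_monic _)) scale1r root_prod_XsubC.
set S := (X in sup X).
have ub : forall x, S x -> x <= c.
  move=> x [w hw <-]; apply: le_bigmax_seq => //; exact: inrs.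
case: (pselect (exists x, S x)) => [ne|nne].
  by apply: le_lt_trans hc; apply: ge_sup => //.
have -> : S = set0.
  apply: funext => x; apply: propext; split => // hx; exfalso; apply: nne.
  by exists x.
by rewrite sup0 ltr01.
Qed.
End Alg.
Theorem theorem4p2 (R : realType) (m n : nat)
  (A M N U V : 'M[R]_(m, n)) (Ad Md Ud : 'M[R]_(n, m)) :
  is_mpinv A Ad -> mx_nonneg Ad ->
  proper_weak_regular_splitting A M N Md ->
  proper_weak_regular_splitting A U V Ud ->
  spectral_radius (Ud *m V *m Md *m N) < 1.
Proof.
move=> hA hAd sM sU.
have hk := key_id hA sM sU.
case: sM => _ _ _ [hMd _] [hMN _].
case: sU => _ _ _ [hUd _] [hUV _].
have hB : nn (Ud *m V *m Md) by apply: nn_mul.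
apply: sr_lt1; apply: eig_bound.
  by rewrite -!mulmxA mulmxA; apply: nn_mul => //; rewrite mulmxA.
move=> a l ha hl hle.
apply: (@real_arg R m n Ad Ud (Ud *m V *m Md) (V *m Md *m N) a l) => //.
- exact: hAd.1.
- by rewrite !mulmxA.
- by move=> j; have := hle j; rewrite !mulmxA.
Qed.
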